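(* Let $(\gamma_i)_{i\in\omega}$ be modal formulas such that $\gamma_{i_2}\in\mathsf{K}+\gamma_{i_1}$ whenever $i_2<i_1$. Suppose that for every $l$ there is $n$ such that for every $k$ there is an inverse system $(\mathfrak{F}_i)_{i\in\omega}$ of finite Kripke frames with: (L1) $\mathfrak{F}_i\models\gamma_k$ for all $i$; (L2) $\varprojlim\mathfrak{F}_i\models\gamma_l$; (L3) $\varprojlim\mathfrak{F}_i\not\models\gamma_n$. Then for every set $\Sigma$ of modal formulas with $\mathsf{K}+\Sigma=\mathsf{K}+\{\gamma_n\mid n\in\omega\}$, infinitely many formulas of $\Sigma$ are not canonical.
   Context: $\mathsf{K}+\Sigma$ is the least normal modal logic containing $\Sigma$. A modal formula $\phi$ is canonical if it is valid in the canonical Kripke frame of the logic $\mathsf{K}+\phi$. An inverse system of Kripke frames indexed by $(\omega,\le)$ consists of frames $\mathfrak{F}_i=(W_i,(R_{i,\lambda}))$ and frame homomorphisms (bounded morphisms / p-morphisms) $f_{ij}:\mathfrak{F}_i\to\mathfrak{F}_j$ for $i\ge j$ with $f_{ii}=\mathrm{id}$ and $f_{jk}\circ f_{ij}=f_{ik}$ for $k\le j\le i$. Its inverse limit $\varprojlim\mathfrak{F}_i$ has carrier $\{x\in\prod_i W_i: f_{ij}(x_i)=x_j \text{ for all } i\ge j\}$ and $xR_\lambda y$ iff $x_iR_{i,\lambda}y_i$ for all $i$. *)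

(* Defs.v *)
From Stdlib Require Import List Arith.
Import ListNotations.
Set Implicit Arguments.

Section Modal.
Variable Lam : Type.

Inductive form : Type :=
| Var : nat -> form
| Bot : form
| Imp : form -> form -> form
| Box : Lam -> form -> form.

Definition Neg (a : form) : form := Imp a Bot.

Fixpoint subst (s : nat -> form) (a : form) : form :=
  match a with
  | Var n => s n
  | Bot => Bot
  | Imp a b => Imp (subst s a) (subst s b)
  | Box l a => Box l (subst s a)
  end.

(** Classical tautologies: true under every boolean assignment to the
    propositional atoms, where boxed formulas are treated as atoms. *)
Fixpoint beval (v : form -> bool) (a : form) : bool :=
  match a with
  | Var n => v (Var n)
  | Bot => false
  | Imp a b => implb (beval v a) (beval v b)
  | Box l a => v (Box l a)
  end.

Definition tautology (a : form) : Prop := forall v, beval v a = true.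

Inductive KPlus (Sigma : form -> Prop) : form -> Prop :=
| kp_taut a : tautology a -> KPlus Sigma a
| kp_K l a b : KPlus Sigma (Imp (Box l (Imp a b)) (Imp (Box l a) (Box l b)))
| kp_ax a : Sigma a -> KPlus Sigma a
| kp_mp a b : KPlus Sigma (Imp a b) -> KPlus Sigma a -> KPlus Sigma b
| kp_nec l a : KPlus Sigma a -> KPlus Sigma (Box l a)
| kp_subst s a : KPlus Sigma a -> KPlus Sigma (subst s a).

Record frame : Type := Frame {
  W : Type;
  Rel : Lam -> W -> W -> Prop
}.

Fixpoint forces (F : frame) (V : nat -> W F -> Prop) (w : W F) (a : form) : Prop :=
  match a with
  | Var n => V n w
  | Bot => False
  | Imp a b => forces F V w a -> forces F V w b
  | Box l a => forall u, Rel F l w u -> forces F V u a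
  end.

Definition valid (F : frame) (a : form) : Prop :=
  forall (V : nat -> W F -> Prop) (w : W F), forces F V w a.

Definition finite_frame (F : frame) : Prop :=
  exists l : list (W F), forall w, In w l.

Fixpoint impchain (l : list form) (c : form) : form :=
  match l with
  | [] => c
  | a :: l' => Imp a (impchain l' c)
  end.

Definition consistent (L : form -> Prop) (G : form -> Prop) : Prop :=
  ~ exists l : list form, (forall a, In a l -> G a) /\ L (impchain l Bot).

Definition maximal_consistent (L : form -> Prop) (G : form -> Prop) : Prop :=
  consistent L G /\
  forall D : form -> Prop, consistent L D -> (forall a, G a -> D a) -> (forall a, D a -> G a).

Definition canonical_frame (L : form -> Prop) : frame :=
  {| W := { G : form -> Prop | maximal_consistent L G };
     Rel := fun l G D => forall a, proj1_sig G (Box l a) -> proj1_sig D a |}.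

Definition canonical (phi : form) : Prop :=
  valid (canonical_frame (KPlus (fun a => a = phi))) phi.

Definition bounded_morphism (F G : frame) (h : W F -> W G) : Prop :=
  (forall l x y, Rel F l x y -> Rel G l (h x) (h y)) /\
  (forall l x y', Rel G l (h x) y' -> exists y, Rel F l x y /\ h y = y').

(** Inverse systems of frames indexed by (omega, <=): the maps f i j are only
    required to be meaningful for j <= i. *)
Definition inverse_system (F : nat -> frame) (f : forall i j, W (F i) -> W (F j)) : Prop :=
  (forall i j, j <= i -> bounded_morphism (F i) (F j) (f i j)) /\
  (forall i x, f i i x = x) /\
  (forall i j k, k <= j -> j <= i -> forall x, f j k (f i j x) = f i k x).

Definition inverse_limit (F : nat -> frame) (f : forall i j, W (F i) -> W (F j)) : frame :=
  {| W := { x : forall i, W (F i) | forall i j, j <= i -> f i j (x i) = x j };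
     Rel := fun l x y => forall i, Rel (F i) l (proj1_sig x i) (proj1_sig y i) |}.

Definition infinite_set (P : form -> Prop) : Prop :=
  ~ exists l : list form, forall a, P a -> In a l.

End Modal.

(* Main.v *)
Require Import Defs.
From Stdlib Require Import List Arith Lia Classical ClassicalEpsilon FunctionalExtensionality ProofIrrelevance PropExtensionality Cantor.
Import ListNotations.
Set Implicit Arguments.

Section Gen.
Variable Lam : Type.

Lemma forces_subst (F : frame Lam) V s (a : form Lam) : forall w,
  forces F V w (subst s a) <-> forces F (fun n y => forces F V y (s n)) w a.
Proof.
  induction a; intro w; simpl; try tauto.
  - rewrite IHa1, IHa2; tauto.
  - split; intros H u Hu; apply IHa; auto; apply H; auto.
Qed.

Definition tv (F : frame Lam) V w : form Lam -> bool :=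
  fun c => if excluded_middle_informative (forces F V w c) then true else false.

Lemma beval_tv F V w a : beval (tv F V w) a = true <-> forces F V w a.
Proof.
  induction a; simpl.
  - unfold tv; destruct (excluded_middle_informative _); simpl; split; intros; auto; try discriminate; contradiction.
  - split; intros; [discriminate|contradiction].
  - rewrite <- IHa1, <- IHa2.
    destruct (beval _ a1), (beval _ a2); simpl; intuition; discriminate.
  - unfold tv; destruct (excluded_middle_informative _); simpl; split; intros; auto; try discriminate; contradiction.
Qed.

Lemma valid_sound (F : frame Lam) (S : form Lam -> Prop) :
  (forall b, S b -> valid F b) -> forall a, KPlus S a -> valid F a.
Proof.
  intros HS a H; induction H; intros V w.
  - apply beval_tv. apply H.
  - simpl. intros H1 H2 u Hu. apply H1; auto.
  - apply HS; auto.
  - apply (IHKPlus1 V w), IHKPlus2.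
  - simpl; intros; apply IHKPlus.
  - apply forces_subst. apply IHKPlus.
Qed.

Lemma KPlus_trans (S1 S2 : form Lam -> Prop) :
  (forall b, S1 b -> KPlus S2 b) -> forall a, KPlus S1 a -> KPlus S2 a.
Proof.
  intros H a Ha; induction Ha.
  - apply kp_taut; auto.
  - apply kp_K.
  - auto.
  - eapply kp_mp; eauto.
  - apply kp_nec; auto.
  - apply kp_subst; auto.
Qed.

Lemma beval_impchain v l (c : form Lam) :
  beval v (impchain l c) = true <-> ((forall a, In a l -> beval v a = true) -> beval v c = true).
Proof.
  induction l as [|a l IH]; simpl.
  - split; [auto| intros H; apply H; intros; contradiction].
  - destruct (beval v a) eqn:E; simpl.
    + rewrite IH. split.
      * intros H H'. apply H. intros; apply H'; auto.
      * intros H H'. apply H. intros b [<-|Hb]; auto.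
    + split; intros H; auto. intros H'. rewrite (H' a (or_introl eq_refl)) in E. discriminate.
Qed.

Lemma forces_impchain F V w l (c : form Lam) :
  forces F V w (impchain l c) <-> ((forall a, In a l -> forces F V w a) -> forces F V w c).
Proof.
  induction l as [|a l IH]; simpl.
  - split; [auto| intros H; apply H; intros; contradiction].
  - rewrite IH. split.
    + intros H H'. apply H; auto.
    + intros H Ha H2. apply H. intros b [<-|Hb]; auto.
Qed.

Fixpoint occurs (n : nat) (a : form Lam) : Prop :=
  match a with
  | Var _ m => m = n
  | Bot _ => False
  | Imp a b => occurs n a \/ occurs n b
  | Box _ a => occurs n a
  end.

Lemma bm_forces (F G : frame Lam) h V V' : bounded_morphism F G h ->
  forall a, (forall n, occurs n a -> forall x, V n x <-> V' n (h x)) ->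
  forall x, forces F V x a <-> forces G V' (h x) a.
Proof.
  intros [Hf Hb] a; induction a; intros Hv x; simpl.
  - apply Hv; simpl; reflexivity.
  - tauto.
  - rewrite (IHa1 (fun n o => Hv n (or_introl o)) x), (IHa2 (fun n o => Hv n (or_intror o)) x). tauto.
  - split.
    + intros H u Hu. destruct (Hb _ _ _ Hu) as [y [Hy <-]]. apply IHa; auto.
    + intros H y Hy. apply IHa; auto.
Qed.

Definition bigor (l : list (form Lam)) : form Lam :=
  fold_right (fun a b => Imp (Neg a) b) (Bot Lam) l.

Lemma beval_bigor v l : beval v (bigor l) = true <-> exists c, In c l /\ beval v c = true.
Proof.
  induction l as [|a l IH]; simpl.
  - split; [discriminate| intros [c [[] _]]].
  - destruct (beval v a) eqn:E; simpl.
    + split; auto. intros _. exists a; auto.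
    + split.
      * intros H; destruct (proj1 IH H) as [c [Hc Hc']]; exists c; auto.
      * intros [c [[<-|Hc] Hc']]. congruence. apply IH; eauto.
Qed.

Lemma forces_bigor F V w l : forces F V w (bigor l) <-> exists c, In c l /\ forces F V w c.
Proof.
  induction l as [|a l IH]; simpl.
  - split; [contradiction| intros [c [[] _]]].
  - rewrite IH. split.
    + intros H. destruct (classic (forces F V w a)) as [Ha|Ha]; [exists a; auto|].
      destruct (H Ha) as [c [Hc Hc']]; exists c; auto.
    + intros [c [[<-|Hc] Hc']] Hn; [contradiction|]. exists c; auto.
Qed.

End Gen.
Unset Implicit Arguments.
Set Implicit Arguments.

Section Lim.
Variable Lam : Type.
Variable F : nat -> frame Lam.
Variable f : forall i j, W (F i) -> W (F j).
Hypothesis Hsys : inverse_system F f.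

Definition X := inverse_limit F f.
Definition pi i (x : W X) : W (F i) := proj1_sig x i.

Lemma thread (x : W X) i j : j <= i -> f i j (pi i x) = pi j x.
Proof. intros; unfold pi; apply (proj2_sig x); auto. Qed.

Section Back.
Variables (l : Lam) (x : W X) (i : nat) (w : W (F i)).
Hypothesis Hw : Rel (F i) l (pi i x) w.

Definition step j (v : W (F j)) (Hv : Rel (F j) l (pi j x) v) :
  {v' : W (F (S j)) | Rel (F (S j)) l (pi (S j) x) v' /\ f (S j) j v' = v}.
Proof.
  apply constructive_indefinite_description.
  destruct Hsys as [Hbm _].
  destruct (Hbm (S j) j (Nat.le_succ_diag_r j)) as [_ Hb].
  apply Hb. rewrite thread; auto.
Defined.

Fixpoint zz (t : nat) : {v : W (F (t + i)) | Rel (F (t+i)) l (pi (t+i) x) v} :=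
  match t as t0 return {v : W (F (t0 + i)) | Rel (F (t0+i)) l (pi (t0+i) x) v} with
  | 0 => exist _ w Hw
  | S t' => exist _ (proj1_sig (step (t'+i) (proj1_sig (zz t')) (proj2_sig (zz t'))))
                    (proj1 (proj2_sig (step (t'+i) (proj1_sig (zz t')) (proj2_sig (zz t')))))
  end.

Lemma zz_S t : f (S (t+i)) (t+i) (proj1_sig (zz (S t))) = proj1_sig (zz t).
Proof. simpl. exact (proj2 (proj2_sig (step (t+i) (proj1_sig (zz t)) (proj2_sig (zz t))))). Qed.

Lemma zz_down d t : f (d + t + i) (t + i) (proj1_sig (zz (d + t))) = proj1_sig (zz t).
Proof.
  destruct Hsys as [_ [Hid Hcomp]].
  induction d.
  - simpl. apply Hid.
  - rewrite <- (Hcomp (S (d+t+i)) (d+t+i) (t+i)); [|lia|lia].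
    change (f (d + t + i) (t + i) (f (S (d + t + i)) (d + t + i) (proj1_sig (zz (S (d + t))))) = proj1_sig (zz t)).
    rewrite zz_S. exact IHd.
Qed.

Lemma zz_le j k : k <= j -> f (j + i) (k + i) (proj1_sig (zz j)) = proj1_sig (zz k).
Proof.
  intros H. destruct (Nat.le_exists_sub k j H) as [p [-> _]]. apply zz_down.
Qed.

Definition yf j : W (F j) := f (j + i) j (proj1_sig (zz j)).

Lemma yf_thread j k : k <= j -> f j k (yf j) = yf k.
Proof.
  intros H. destruct Hsys as [_ [Hid Hcomp]]. unfold yf.
  rewrite Hcomp; [|lia|lia].
  rewrite <- (Hcomp (j+i) (k+i) k); [|lia|lia].
  rewrite zz_le; auto.
Qed.

Definition ypt : W X := exist (fun y : forall j, W (F j) => forall a b, b <= a -> f a b (y a) = y b) yf (fun j k H => yf_thread H).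

Lemma ypt_rel : Rel X l x ypt.
Proof.
  intro j. simpl. unfold yf.
  destruct Hsys as [Hbm _].
  change (proj1_sig x j) with (pi j x).
  rewrite <- (thread x (i:=j+i) (j:=j)); [|lia].
  apply (proj1 (Hbm (j+i) j ltac:(lia)) l). exact (proj2_sig (zz j)).
Qed.

Lemma ypt_pi : pi i ypt = w.
Proof.
  destruct Hsys as [_ [Hid Hcomp]].
  unfold pi, ypt; simpl; unfold yf.
  rewrite <- (Hcomp (i+i) (0+i) i); [|lia|lia].
  rewrite (zz_le (j:=i) (k:=0)); [|lia]. simpl. apply Hid.
Qed.

End Back.

Lemma pi_back l (x : W X) i w : Rel (F i) l (pi i x) w -> exists y : W X, Rel X l x y /\ pi i y = w.
Proof. intros Hw. exists (@ypt l x i w Hw). split; [apply ypt_rel|apply ypt_pi]. Qed.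

Lemma pi_bm i : bounded_morphism X (F i) (pi i).
Proof. split. intros l x y H; apply H. intros l x y' H. apply pi_back; auto. Qed.


Definition admissible (V : nat -> W X -> Prop) :=
  forall n, exists i (P : W (F i) -> Prop), forall x, V n x <-> P (pi i x).

Lemma lemC V : admissible V -> forall a, exists i (P : W (F i) -> Prop), forall x, forces X V x a <-> P (pi i x).
Proof.
  intros HV a; induction a.
  - apply HV.
  - exists 0, (fun _ => False). simpl; tauto.
  - destruct IHa1 as [i1 [P1 H1]], IHa2 as [i2 [P2 H2]].
    exists (max i1 i2), (fun w => P1 (f (max i1 i2) i1 w) -> P2 (f (max i1 i2) i2 w)).
    intro x; simpl. rewrite H1, H2, !thread; [tauto|lia|lia].
  - destruct IHa as [i [P HP]].
    exists i, (fun w => forall w', Rel (F i) l w w' -> P w').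
    intro x; simpl; split.
    + intros H w' Hw'. destruct (pi_back _ _ _ _ Hw') as [y [Hy e]]. rewrite <- e. apply HP, H, Hy.
    + intros H y Hy. apply HP. apply H. apply Hy.
Qed.

Lemma lemA V : admissible V -> forall a : form Lam, exists i, forall n, occurs n a ->
  forall x x', pi i x = pi i x' -> (V n x <-> V n x').
Proof.
  intros HV a; induction a.
  - destruct (HV n) as [i [P HP]]. exists i. intros m Hm x x' E; simpl in Hm; subst.
    rewrite !HP, E; tauto.
  - exists 0; intros n [].
  - destruct IHa1 as [i1 H1], IHa2 as [i2 H2].
    exists (max i1 i2). intros n [Ho|Ho] x x' E.
    + apply H1; auto. rewrite <- !(thread _ (i:=max i1 i2) (j:=i1)); [congruence|lia|lia].
    + apply H2; auto. rewrite <- !(thread _ (i:=max i1 i2) (j:=i2)); [congruence|lia|lia].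
  - exact IHa.
Qed.

Lemma adm_sound (S : form Lam -> Prop) : (forall b, S b -> forall i, valid (F i) b) ->
  forall a, KPlus S a -> forall V, admissible V -> forall x, forces X V x a.
Proof.
  intros HS a H; induction H; intros V HV x.
  - apply beval_tv. apply H.
  - simpl. intros H1 H2 u Hu. apply H1; auto.
  - destruct (lemA HV a) as [i Hi].
    set (Vi := fun n (w : W (F i)) => exists x', pi i x' = w /\ V n x').
    refine (proj2 (@bm_forces Lam X (F i) (pi i) V Vi (pi_bm i) a _ x) _).
    2: apply (HS a H i).
    intros n Ho y. split.
    + intros Hy. exists y; auto.
    + intros [x' [e Hx']]. apply (Hi n Ho x'); auto.
  - apply (IHKPlus1 V HV x), IHKPlus2; auto.
  - simpl; intros; apply IHKPlus; auto.
  - apply forces_subst. apply IHKPlus.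
    intro n. apply lemC; auto.
Qed.

End Lim.
Unset Implicit Arguments.
Set Implicit Arguments.

Lemma implb_intro b1 b2 : (b1 = true -> b2 = true) -> implb b1 b2 = true.
Proof. destruct b1, b2; simpl; auto. Qed.

Section MCS.
Variable Lam : Type.
Variable S0 : form Lam -> Prop.
Variable D : form Lam -> Prop.
Hypothesis HD : maximal_consistent (KPlus S0) D.

Lemma cover (a : form Lam) l : (forall c, In c l -> D c \/ c = a) ->
  exists l', (forall c, In c l' -> D c) /\ forall c, In c l -> In c l' \/ c = a.
Proof.
  induction l as [|c l IH]; intros H.
  - exists nil; split; intros c []; auto.
  - destruct IH as [l' [H1 H2]]. intros; apply H; simpl; auto.
    destruct (H c (or_introl eq_refl)) as [Dc|e].
    + exists (c :: l'). split.
      * intros d [<-|Hd]; auto.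
      * intros d [<-|Hd]; [left; left; auto|]. destruct (H2 d Hd); [left; right|right]; auto.
    + exists l'. split; auto. intros d [<-|Hd]; auto.
Qed.

Lemma incons a : ~ consistent (KPlus S0) (fun c => D c \/ c = a) ->
  exists l, (forall c, In c l -> D c) /\ KPlus S0 (impchain l (Neg a)).
Proof.
  intros H. unfold consistent in H. apply NNPP in H. destruct H as [l [Hl HL]].
  destruct (cover l Hl) as [l' [H1 H2]].
  exists l'. split; auto.
  apply kp_mp with (impchain l (Bot Lam)); auto.
  apply kp_taut. intro v. simpl. apply implb_intro. intro Hc.
  rewrite beval_impchain in Hc |- *. intro Hl'. simpl.
  destruct (beval v a) eqn:Ea; [|reflexivity].
  apply Hc. intros c Hin. destruct (H2 c Hin) as [Hc'|<-]; auto.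
Qed.

Lemma maxc a : consistent (KPlus S0) (fun c => D c \/ c = a) -> D a.
Proof. intros Hc. apply (proj2 HD _ Hc); auto. Qed.

Lemma DC l b : (forall c, In c l -> D c) -> KPlus S0 (impchain l b) -> D b.
Proof.
  intros Hl HL. apply NNPP; intro Hb.
  assert (Hi : ~ consistent (KPlus S0) (fun c => D c \/ c = b)) by (intro Hc; apply Hb, maxc; auto).
  destruct (incons Hi) as [l2 [Hl2 HL2]].
  apply (proj1 HD). exists (l ++ l2). split.
  - intros c Hc; apply in_app_or in Hc; destruct Hc; auto.
  - apply kp_mp with (impchain l2 (Neg b)); auto.
    apply kp_mp with (impchain l b); auto.
    apply kp_taut. intro v. simpl. apply implb_intro. intro H1. apply implb_intro. intro H2.
    rewrite beval_impchain in H1, H2 |- *. intro Hall.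
    assert (E1 : beval v b = true) by (apply H1; intros; apply Hall, in_or_app; auto).
    assert (E2 : beval v (Neg b) = true) by (apply H2; intros; apply Hall, in_or_app; auto).
    simpl in E2. rewrite E1 in E2. exact E2.
Qed.

Lemma NC a : ~ D a -> D (Neg a).
Proof.
  intros Ha. assert (Hi : ~ consistent (KPlus S0) (fun c => D c \/ c = a)) by (intro Hc; apply Ha, maxc; auto).
  destruct (incons Hi) as [l [Hl HL]]. eapply DC; eauto.
Qed.

Lemma DCF l : (forall c, In c l -> D c) -> (forall v, (forall c, In c l -> beval v c = true) -> False) -> False.
Proof.
  intros Hl Ht. apply (proj1 HD). exists l. split; auto.
  apply kp_taut. intro v. apply beval_impchain. intro H. exfalso. eapply Ht; eauto.
Qed.

End MCS.
Unset Implicit Arguments.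
Set Implicit Arguments.

Section Canon.
Variable Lam : Type.
Variable F : nat -> frame Lam.
Variable f : forall i j, W (F i) -> W (F j).
Hypothesis Hsys : inverse_system F f.
Hypothesis Hfin : forall i, finite_frame (F i).
Variable sigma : form Lam.
Hypothesis Hval : forall i, valid (F i) sigma.
Variable x0 : W (X F f).

Definition Lst i : list (W (F i)) := proj1_sig (constructive_indefinite_description _ (Hfin i)).
Lemma Lst_in i w : In w (Lst i).
Proof. unfold Lst; destruct (constructive_indefinite_description _ _); simpl; auto. Qed.

Definition dd i : W (F i) := pi i x0.
Definition Vg (n : nat) (x : W (X F f)) : Prop :=
  pi (fst (of_nat n)) x = nth (snd (of_nat n)) (Lst (fst (of_nat n))) (dd (fst (of_nat n))).
Definition atom i m : form Lam := Var Lam (to_nat (i, m)).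
Lemma Vg_atom i m x : Vg (to_nat (i,m)) x <-> pi i x = nth m (Lst i) (dd i).
Proof. unfold Vg. rewrite cancel_of_to. simpl. tauto. Qed.
Lemma Vg_adm : admissible Vg.
Proof.
  intro n. exists (fst (of_nat n)), (fun w => w = nth (snd (of_nat n)) (Lst (fst (of_nat n))) (dd (fst (of_nat n)))).
  intro; unfold Vg; tauto.
Qed.
Lemma idx i w : exists m, nth m (Lst i) (dd i) = w.
Proof. destruct (In_nth _ _ (dd i) (Lst_in i w)) as [m [_ H]]; eauto. Qed.

Definition LL := KPlus (fun a => a = sigma).
Lemma Lsound a : LL a -> forall x, forces (X F f) Vg x a.
Proof. intros H x. eapply adm_sound; eauto. intros b -> i; auto. apply Vg_adm. Qed.

Definition G (x : W (X F f)) : form Lam -> Prop := fun a => forces (X F f) Vg x a.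
Lemma G_mcs x : maximal_consistent LL (G x).
Proof.
  split.
  - intros [l [Hl HL]]. pose proof (Lsound HL x) as H. rewrite forces_impchain in H. exact (H Hl).
  - intros D HD Hsub a Da. apply NNPP; intro Hn. apply HD. exists [a; Neg a]. split.
    + intros b [<-|[<-|[]]]; auto; apply Hsub; exact Hn.
    + apply kp_taut. intro v; simpl. destruct (beval v a); reflexivity.
Qed.
Definition C := canonical_frame LL.
Definition g (x : W (X F f)) : W C := exist _ (G x) (G_mcs x).

Lemma g_back l x (D : W C) : Rel C l (g x) D -> exists y, Rel (X F f) l x y /\ g y = D.
Proof.
  intros HR.
  destruct D as [D HD]. simpl in HR.
  assert (Hbox : forall psi, (forall z, forces (X F f) Vg z psi) -> D psi).
  { intros psi H. apply HR. unfold G; simpl. intros; apply H. }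
  assert (Hm : forall i, exists m, D (atom i m)).
  { intro i. apply NNPP; intro Hn.
    set (ats := map (atom i) (seq 0 (length (Lst i)))).
    apply (DCF HD (bigor ats :: map (@Neg Lam) ats)).
    - intros c [<-|Hc].
      + apply Hbox. intro z. apply forces_bigor.
        destruct (In_nth _ _ (dd i) (Lst_in i (pi i z))) as [m [Hlt Hm]].
        exists (atom i m). split.
        * unfold ats. apply in_map, in_seq. lia.
        * unfold atom; simpl; apply Vg_atom; auto.
      + apply in_map_iff in Hc. destruct Hc as [c' [<- Hc']]. apply (NC HD). intro Hd.
        unfold ats in Hc'. apply in_map_iff in Hc'. destruct Hc' as [m [<- _]]. apply Hn; eauto.
    - intros v Hv. assert (H1 := Hv _ (or_introl eq_refl)). apply beval_bigor in H1.
      destruct H1 as [c [Hc Hc']]. assert (H2 := Hv (Neg c) (or_intror (in_map _ _ _ Hc))).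
      simpl in H2. rewrite Hc' in H2. discriminate. }
  set (mf := fun i => proj1_sig (constructive_indefinite_description _ (Hm i))).
  assert (HmD : forall i, D (atom i (mf i))) by (intro i; unfold mf; destruct (constructive_indefinite_description _ _); auto).
  set (yc := fun i => nth (mf i) (Lst i) (dd i)).
  assert (Hat : forall i z, forces (X F f) Vg z (atom i (mf i)) <-> pi i z = yc i) by (intros; apply Vg_atom).
  assert (Hthr : forall j k, k <= j -> f j k (yc j) = yc k).
  { intros j k Hkj. apply NNPP; intro Hne.
    apply (DCF HD [atom j (mf j); atom k (mf k); Imp (atom j (mf j)) (Neg (atom k (mf k)))]).
    - intros c [<-|[<-|[<-|[]]]]; auto. apply Hbox. intros z H1 H2.
      apply Hat in H1. apply Hat in H2. apply Hne. rewrite <- H1, <- H2. apply thread; auto.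
    - intros v Hv.
      assert (A1 := Hv _ (or_introl eq_refl)). assert (A2 := Hv _ (or_intror (or_introl eq_refl))).
      assert (A3 := Hv _ (or_intror (or_intror (or_introl eq_refl)))).
      unfold atom in *; simpl in *. rewrite A1, A2 in A3. discriminate. }
  set (y := exist (fun y : forall j, W (F j) => forall a b, b <= a -> f a b (y a) = y b) yc Hthr : W (X F f)).
  assert (Hpy : forall i, pi i y = yc i) by reflexivity.
  assert (Hrel : Rel (X F f) l x y).
  { intro i. change (Rel (F i) l (pi i x) (pi i y)). rewrite Hpy. apply NNPP; intro Hn.
    apply (DCF HD [atom i (mf i); Neg (atom i (mf i))]).
    - intros c [<-|[<-|[]]]; auto. apply HR. unfold G; simpl. intros z Hz H1.
      apply Hat in H1. apply Hn. rewrite <- H1. apply Hz.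
    - intros v Hv.
      assert (A1 := Hv _ (or_introl eq_refl)). assert (A2 := Hv _ (or_intror (or_introl eq_refl))).
      unfold atom in *; simpl in *. rewrite A1 in A2. discriminate. }
  assert (Hsub : forall a, D a -> G y a).
  { intros a Da. apply NNPP; intro Hn.
    destruct (lemC Hsys Vg_adm a) as [i [P HP]].
    apply (DCF HD [atom i (mf i); Imp (atom i (mf i)) (Neg a); a]).
    - intros c [<-|[<-|[<-|[]]]]; auto. apply Hbox. intros z H1 H2. apply Hat in H1. apply Hn.
      unfold G. apply HP. rewrite Hpy, <- H1. apply HP. exact H2.
    - intros v Hv.
      assert (A1 := Hv _ (or_introl eq_refl)). assert (A2 := Hv _ (or_intror (or_introl eq_refl))).
      assert (A3 := Hv _ (or_intror (or_intror (or_introl eq_refl)))).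
      unfold atom in *; simpl in *. rewrite A1, A3 in A2. discriminate. }
  exists y. split; auto.
  unfold g. apply subset_eq_compat. apply functional_extensionality; intro a.
  apply propositional_extensionality; split; [|apply Hsub].
  apply (proj2 HD (G y) (proj1 (G_mcs y)) Hsub a).
Qed.

Lemma g_inj x x' : g x = g x' -> x = x'.
Proof.
  intros E. assert (E' : G x = G x') by (apply (f_equal (@proj1_sig _ _)) in E; exact E).
  assert (Hi : forall i, pi i x = pi i x').
  { intro i. destruct (idx i (pi i x)) as [m Hm].
    assert (H : G x (atom i m)) by (change (Vg (to_nat (i,m)) x); apply Vg_atom; auto).
    rewrite E' in H. change (Vg (to_nat (i,m)) x') in H. apply (proj1 (Vg_atom i m x')) in H.
    congruence. }
  destruct x as [x Hx], x' as [x' Hx']. apply subset_eq_compat. apply functional_extensionality_dep. exact Hi.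
Qed.

Variable V : nat -> W (X F f) -> Prop.
Definition Vc n (D : W C) : Prop := exists x, D = g x /\ V n x.
Lemma iso a : forall x, forces (X F f) V x a <-> forces C Vc (g x) a.
Proof.
  induction a; intro x; simpl.
  - split.
    + intro; exists x; auto.
    + intros [x' [E Hv]]. apply g_inj in E. subst; auto.
  - tauto.
  - rewrite IHa1, IHa2; tauto.
  - split.
    + intros H u Hu. destruct (g_back Hu) as [y [Hy <-]]. apply IHa, H, Hy.
    + intros H y Hy. apply IHa. apply H. intros b Hb. apply Hb. exact Hy.
Qed.

End Canon.

Lemma transfer Lam (F : nat -> frame Lam) f : inverse_system F f -> (forall i, finite_frame (F i)) ->
  forall sigma, canonical sigma -> (forall i, valid (F i) sigma) -> valid (inverse_limit F f) sigma.
Proof.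
  intros Hs Hf sigma Hc Hv V w.
  apply (proj2 (@iso Lam F f Hs Hf sigma Hv w V sigma w)). apply Hc.
Qed.
Unset Implicit Arguments.
Set Implicit Arguments.

Theorem lemmal16 (Lam : Type) (gamma : nat -> form Lam) :
  (forall i1 i2, i2 < i1 -> KPlus (fun a => a = gamma i1) (gamma i2)) ->
  (forall l, exists n, forall k,
     exists (F : nat -> frame Lam) (f : forall i j, W (F i) -> W (F j)),
       inverse_system F f /\
       (forall i, finite_frame (F i)) /\
       (forall i, valid (F i) (gamma k)) /\
       valid (inverse_limit F f) (gamma l) /\
       ~ valid (inverse_limit F f) (gamma n)) ->
  forall Sigma : form Lam -> Prop,
    (forall a, KPlus Sigma a <-> KPlus (fun b => exists n, b = gamma n) a) ->
    infinite_set (fun a => Sigma a /\ ~ canonical a).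
Proof.
  intros Hchain Hsys Sigma HS [lst Hlst].
  assert (Hmono : forall m m', m <= m' -> forall a, KPlus (fun b => b = gamma m) a -> KPlus (fun b => b = gamma m') a).
  { intros m m' Hle a Ha. apply KPlus_trans with (fun b => b = gamma m); auto.
    intros b ->. destruct (le_lt_eq_dec _ _ Hle) as [Hlt| <-]; auto. apply kp_ax; reflexivity. }
  assert (Hfin : forall a, KPlus (fun b => exists n, b = gamma n) a -> exists m, KPlus (fun b => b = gamma m) a).
  { induction 1.
    - exists 0; apply kp_taut; auto.
    - exists 0; apply kp_K.
    - destruct H as [n ->]; exists n; apply kp_ax; reflexivity.
    - destruct IHKPlus1 as [m1 H1], IHKPlus2 as [m2 H2]. exists (max m1 m2).
      apply kp_mp with a; [apply (Hmono m1) | apply (Hmono m2)]; auto; lia.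
    - destruct IHKPlus as [m Hm]; exists m; apply kp_nec; auto.
    - destruct IHKPlus as [m Hm]; exists m; apply kp_subst; auto. }
  assert (HSg : forall a, Sigma a -> exists m, KPlus (fun b => b = gamma m) a).
  { intros a Ha. apply Hfin, HS, kp_ax, Ha. }
  assert (Hl : forall l', exists m, forall a, In a l' -> Sigma a -> KPlus (fun b => b = gamma m) a).
  { induction l' as [|a l' IH].
    - exists 0; intros a [].
    - destruct IH as [m Hm]. destruct (classic (Sigma a)) as [Ha|Ha].
      + destruct (HSg a Ha) as [ma Hma]. exists (max m ma).
        intros b [<-|Hb] Hsb; [apply (Hmono ma) | apply (Hmono m)]; auto; lia.
      + exists m. intros b [<-|Hb] Hsb; auto; contradiction. }
  destruct (Hl lst) as [m Hm].
  assert (Hnc : forall a, Sigma a -> ~ canonical a -> KPlus (fun b => b = gamma m) a).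
  { intros a H1 H2. apply Hm; auto. }
  destruct (Hsys m) as [n Hn].
  assert (Key : forall a, KPlus Sigma a -> exists k, forall F f, inverse_system F f ->
      (forall i, finite_frame (F i)) -> (forall i, valid (F i) (gamma k)) ->
      valid (inverse_limit F f) (gamma m) -> valid (inverse_limit F f) a).
  { induction 1.
    - exists 0; intros; apply valid_sound with (S := fun _ => False); [intros; contradiction|].
      apply kp_taut; auto.
    - exists 0; intros; apply valid_sound with (S := fun _ => False); [intros; contradiction|].
      apply kp_K.
    - destruct (classic (canonical a)) as [Hc|Hc].
      + destruct (HSg a H) as [k Hk]. exists k. intros F f Hs Hf Hv _.
        apply transfer; auto. intro i.
        apply valid_sound with (S := fun b => b = gamma k); auto. intros b ->; auto.
      + exists 0. intros F f _ _ _ Hv.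
        apply valid_sound with (S := fun b => b = gamma m); auto. intros b ->; auto.
    - destruct IHKPlus1 as [k1 H1], IHKPlus2 as [k2 H2]. exists (max k1 k2).
      intros F f Hs Hf Hv Hm'.
      assert (Hv1 : forall k, k <= max k1 k2 -> forall i, valid (F i) (gamma k)).
      { intros k Hk i. apply valid_sound with (S := fun b => b = gamma (max k1 k2)).
        intros c ->; auto. apply (Hmono k); auto. apply kp_ax; reflexivity. }
      intros V w. apply (H1 F f Hs Hf (Hv1 k1 ltac:(lia)) Hm' V w).
      apply (H2 F f Hs Hf (Hv1 k2 ltac:(lia)) Hm' V w).
    - destruct IHKPlus as [k Hk]. exists k. intros F f Hs Hf Hv Hm' V w u Hu.
      apply (Hk F f Hs Hf Hv Hm').
    - destruct IHKPlus as [k Hk]. exists k. intros F f Hs Hf Hv Hm' V w.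
      apply forces_subst. apply (Hk F f Hs Hf Hv Hm'). }
  destruct (Key (gamma n)) as [k Hk].
  { apply HS. apply kp_ax. exists n; reflexivity. }
  destruct (Hn k) as [F [f [Hs [Hf [H1 [H2 H3]]]]]].
  apply H3. apply Hk; auto.
Qed.
Unset Implicit Arguments.
Set Implicit Arguments.
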